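(* Let $(X,d)$ be a metric space, $\mu$ a non-atomic Borel measure on $X$, $\beta>0$, and let $\Gamma^*\subset\Gamma^\mu$ be a family of paths closed under taking non-trivial subpaths that has the $\mu$-arc-chord property with exponent $\beta$. Then every Lipschitz-$\beta$ function $f:X\to\mathbb R$ (i.e. $|f(x)-f(y)|\le L\,d(x,y)^\beta$ for all $x,y$, for some $L$) is absolutely continuous over every path of $\Gamma^*$: for every $\gamma\in\Gamma^*$ with $\mu$-arc length parametrization $\gamma_h:[0,h]\to X$, the function $f\circ\gamma_h$ is absolutely continuous on $[0,h]$.
   Context: A path is a continuous map $\gamma:[a,b]\to X$; a subpath is a restriction to a subinterval, trivial if that interval is a point; $\mathrm{Im}(\gamma)=\gamma([a,b])$. $\mu$ non-atomic: $\mu(\{x\})=0$ for all $x$. $\Gamma^\mu$ is the set of all non-trivial injective paths $\gamma$ with $0<\mu(\mathrm{Im}(\tilde\gamma))<\infty$ for every non-trivial subpath $\tilde\gamma$. For $\gamma:[a,b]\to X$ in $\Gamma^\mu$, $h=\mu(\mathrm{Im}(\gamma))$, $\nu_\gamma(x)=\mu(\gamma([a,x]))$ is a bijection $[a,b]\to[0,h]$, and $\gamma_h=\gamma\circ\nu_\gamma^{-1}$. $\Gamma^*$ has the $\mu$-arc-chord property with exponent $\beta$ if there is $C_\mu>0$ with $\mathrm{diam}(\mathrm{Im}(\gamma))^\beta\le C_\mu\,\mu(\mathrm{Im}(\gamma))$ for all $\gamma\in\Gamma^*$. *)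

(* Defs.v *)
From HB Require Import structures.
From mathcomp Require Import all_boot all_order all_algebra.
From mathcomp Require Import all_classical all_reals all_analysis.
Set Implicit Arguments. Unset Strict Implicit. Unset Printing Implicit Defensive.
Import Order.TTheory GRing.Theory Num.Theory.
Import numFieldNormedType.Exports.
Local Open Scope classical_set_scope.
Local Open Scope ring_scope.

(* A metric space that is nonempty (pointed); MathComp-Analysis requires a
   pointed carrier to build the (Borel) sigma-algebra generated by open sets. *)
#[short(type="pointedMetricType")]
HB.structure Definition PointedMetric (K : numDomainType) :=
  { M of Metric K M & Pointed M }.

Section Defs.
Context {R : realType} {X : pointedMetricType R}.

(* A path: a map gamma defined on the parameter interval [pa, pb] (pa <= pb);
   values of pfun outside [pa, pb] are irrelevant. *)
Record mpath := MPath { pa : R ; pb : R ; pfun : R -> X }.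

Definition is_path (g : mpath) : Prop :=
  pa g <= pb g /\ {within `[pa g, pb g], continuous (pfun g)}.

Definition pimg (g : mpath) (c d : R) : set X := pfun g @` `[c, d].
Definition Im (g : mpath) : set X := pimg g (pa g) (pb g).

Definition nontrivial (g : mpath) : Prop := pa g < pb g.

Definition injective_path (g : mpath) : Prop :=
  {in `[pa g, pb g] &, injective (pfun g)}.

Local Notation borelX := (g_sigma_algebraType (@open X)).

Definition Gamma_mu (mu : set borelX -> \bar R) (g : mpath) : Prop :=
  is_path g /\ nontrivial g /\ injective_path g /\
  forall c d, pa g <= c -> c < d -> d <= pb g ->
    (0 < mu (pimg g c d))%E /\ (mu (pimg g c d) < +oo)%E.

(* closed under taking non-trivial subpaths (up to the irrelevant values
   outside the parameter interval) *)
Definition subpath_closed (G : set mpath) : Prop :=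
  forall g, G g -> forall c d, pa g <= c -> c < d -> d <= pb g ->
    exists2 g', G g' & [/\ pa g' = c, pb g' = d &
                  {in `[c, d], forall t, pfun g' t = pfun g t}].

Definition diam (A : set X) : R :=
  sup [set mdist x y | x in A & y in A].

Definition arc_chord (mu : set borelX -> \bar R) (beta : R) (G : set mpath) :
  Prop :=
  exists2 C : R, 0 < C & forall g, G g ->
    ((diam (Im g) `^ beta)%:E <= C%:E * mu (Im g))%E.

Definition lipschitz_beta (beta : R) (f : X -> R) : Prop :=
  exists L : R, forall x y, `|f x - f y| <= L * (mdist x y `^ beta).

Definition nu (mu : set borelX -> \bar R) (g : mpath) (x : R) : R :=
  fine (mu (pimg g (pa g) x)).

Definition arc_h (mu : set borelX -> \bar R) (g : mpath) : R := fine (mu (Im g)).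

(* gamma_h = gamma o nu_gamma^{-1} : [0, h] -> X *)
Definition arc_param (mu : set borelX -> \bar R) (g : mpath) (t : R) : X :=
  pfun g (get [set x | pa g <= x <= pb g /\ nu mu g x = t]).

Definition abs_cont_on (a b : R) (F : R -> R) : Prop :=
  forall eps : R, 0 < eps -> exists2 delta : R, 0 < delta &
    forall (n : nat) (u v : 'I_n -> R),
      (forall i, a <= u i /\ u i <= v i /\ v i <= b) ->
      (forall i j, i != j -> v i <= u j \/ v j <= u i) ->
      \sum_(i < n) (v i - u i) < delta ->
      \sum_(i < n) `|F (v i) - F (u i)| < eps.

End Defs.

Notation borelX X := (g_sigma_algebraType (@open X)).

(* Main.v *)
Require Import Defs.
From HB Require Import structures.
From mathcomp Require Import all_boot all_order all_algebra.
From mathcomp Require Import all_classical all_reals all_analysis.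
From mathcomp Require Import lra.
Import Order.TTheory GRing.Theory Num.Theory.
Import numFieldNormedType.Exports.
Local Open Scope classical_set_scope.
Local Open Scope ring_scope.

Lemma itvP {R : realType} (x y z : R) : x <= z <= y -> `[x, y]%classic z.
Proof. by rewrite /= in_itv. Qed.

Lemma itvP' {R : realType} (x y z : R) : `[x, y]%classic z -> x <= z <= y.
Proof. by rewrite /= in_itv. Qed.

Lemma w_pos {R : realType} (c : R) n : 0 < c -> 0 < c / n.+1%:R.
Proof. by move=> c0; rewrite divr_gt0 // ltr0n. Qed.

Lemma w_le {R : realType} (c : R) n : 0 < c -> c / n.+1%:R <= c.
Proof. by move=> c0; rewrite ler_pdivrMr ?ltr0n // ler_peMr ?(ltW c0) // ler1n. Qed.

Lemma w_mono {R : realType} (c : R) n m : 0 <= c -> (n <= m)%N ->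
  c / m.+1%:R <= c / n.+1%:R.
Proof.
move=> c0 nm; apply: ler_wpM2l => //.
by rewrite lef_pV2 ?posrE ?ltr0n // ler_nat.
Qed.

Lemma w_small {R : realType} (c z : R) : 0 < z -> exists n, c / n.+1%:R < z.
Proof.
move=> z0; exists (Num.trunc (c / z)).
have := truncnS_gt (c / z); rewrite ltr_pdivrMr // => h.
by rewrite ltr_pdivrMr ?ltr0n // mulrC.
Qed.

Section S.
Context {R : realType} {X : pointedMetricType R}
  {mu : {measure set (borelX X) -> \bar R}} {g : @mpath R X}.
Hypothesis mu0 : forall x : X, mu [set x] = 0%E.
Hypothesis Gg : Gamma_mu mu g.

Local Notation a := (pa g).
Local Notation b := (pb g).
Local Notation ga := (pfun g).

Lemma closed_meas (A : set X) : closed A -> measurable (A : set (borelX X)).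
Proof.
move=> cA; rewrite -(setCK A); apply: measurableC; apply: sub_sigma_algebra.
exact: closed_openC.
Qed.

Lemma compact_pimg c d : a <= c -> d <= b -> compact (pimg g c d).
Proof.
move=> ac db; have [_ cont] : is_path g := Gg.1.
have sc := @segment_compact R c d.
apply: (continuous_compact _ sc).
apply: continuous_subspaceW cont => t /=; rewrite !in_itv /= => /andP[ct td].
by rewrite (le_trans ac ct) (le_trans td db).
Qed.

Lemma closed_pimg c d : a <= c -> d <= b -> closed (pimg g c d).
Proof.
move=> ac db; apply: compact_closed; first exact: metric_hausdorff.
exact: compact_pimg.
Qed.

Lemma meas_pimg c d : a <= c -> d <= b -> measurable (pimg g c d : set (borelX X)).
Proof. by move=> ac db; apply: closed_meas; apply: closed_pimg. Qed.

Lemma meas_set1 (x : X) : measurable ([set x] : set (borelX X)).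
Proof.
apply: closed_meas; apply: compact_closed; first exact: metric_hausdorff.
exact: compact_set1.
Qed.

Lemma pimg1 c : pimg g c c = [set ga c].
Proof.
apply/seteqP; split => [x [t]|x ->]/=.
  by move=> ct <-; congr ga; move: ct; rewrite itv_boundlr /= !bnd_simp => /andP[h1 h2]; apply/eqP; rewrite eq_le h1 h2.
by exists c => //; apply/itvP; rewrite lexx.
Qed.

Lemma inj_ga : {in `[a, b] &, injective ga}.
Proof. by case: Gg => _ [_ []]. Qed.


Lemma pimg_decomp c e d : a <= c -> c <= e -> e <= d -> d <= b ->
  pimg g c d = pimg g c e `|` (pimg g e d `\ ga e).
Proof.
move=> ac ce ed db; apply/seteqP; split => [x [t /itvP' /andP[ct td] <-]|x].
  have [te|et] := leP t e.
    by left; exists t => //; apply/itvP; rewrite ct te.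
  right; split; first by exists t => //; apply/itvP; rewrite (ltW et) td.
  move=> /= /inj_ga => h; suff : t = e by move=> teq; move: et; rewrite teq ltxx.
  apply: h; rewrite in_itv /=; apply/andP; split; lra.
case=> [[t /itvP' /andP[ct te] <-]|[[t /itvP' /andP[et td] <-] _]].
  by exists t => //; apply/itvP; apply/andP; split; lra.
by exists t => //; apply/itvP; apply/andP; split; lra.
Qed.

Lemma pimg_disj c e d : a <= c -> c <= e -> e <= d -> d <= b ->
  pimg g c e `&` (pimg g e d `\ ga e) = set0.
Proof.
move=> ac ce ed db; apply/seteqP; split => // x [[t /itvP' /andP[ct te] <-]].
move=> [[s /itvP' /andP[es sd] st]] /= nte; apply: nte.
have ts : t = s.
  apply: inj_ga => //; rewrite in_itv /=; apply/andP; split; lra.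
have te' : t = e by apply/eqP; rewrite eq_le te ts es.
by rewrite te'.
Qed.

Lemma mu_add c e d : a <= c -> c <= e -> e <= d -> d <= b ->
  mu (pimg g c d) = (mu (pimg g c e) + mu (pimg g e d))%E.
Proof.
move=> ac ce ed db.
have hm : measurable (pimg g e d : set (borelX X)) by apply: meas_pimg; lra.
have hm2 : measurable (pimg g e d `\ ga e : set (borelX X)) by exact: measurableD hm (meas_set1 _).
rewrite (@pimg_decomp c e d ac ce ed db) measureU; last exact: (@pimg_disj c e d).
- congr (_ + _)%E.
  rewrite [in RHS](_ : pimg g e d = (pimg g e d `\ ga e) `|` [set ga e]); last first.
    apply/seteqP; split => [x h|x [[]//|->]].
      by have [->|ne] := pselect (x = ga e); [right|left].

    by exists e => //; apply/itvP; rewrite lexx ed.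
  rewrite measureU //.
  + rewrite [X in (_ + X)%E](_ : _ = 0%E) ?adde0 //; exact: mu0.
  + exact: (meas_set1 (ga e)).
  + by apply/seteqP; split => // x [[_ ]].
- apply: meas_pimg; lra.
- exact: hm2.
Qed.

Lemma mu_fin c d : a <= c -> c <= d -> d <= b -> mu (pimg g c d) \is a fin_num.
Proof.
move=> ac cd db; rewrite ge0_fin_numE ?measure_ge0 //.
move: cd; rewrite le_eqVlt => /predU1P[<-|cd].
  rewrite pimg1 [X in (X < _)%E](_ : _ = 0%E) ?ltey //; exact: mu0.
by have [_ [_ [_ H]]] := Gg; have [] := H c d ac cd db.
Qed.

Lemma nu_diff c d : a <= c -> c <= d -> d <= b ->
  nu mu g d - nu mu g c = fine (mu (pimg g c d)).
Proof.
move=> ac cd db; rewrite /nu (@mu_add a c d) ?lexx ?(le_trans ac cd) //.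
rewrite fineD ?mu_fin ?lexx ?(le_trans ac cd) ?(le_trans cd db) //; lra.
Qed.

Lemma nu_le c d : a <= c -> c <= d -> d <= b -> nu mu g c <= nu mu g d.
Proof. by move=> ac cd db; rewrite -subr_ge0 nu_diff // fine_ge0 // measure_ge0. Qed.

Lemma nu_a : nu mu g a = 0.
Proof. by rewrite /nu pimg1 [X in fine X](_ : _ = 0%E) //; exact: mu0. Qed.

Lemma shrink (l r : nat -> R) p :
  (forall n, [/\ a <= l n, l n <= p, p <= r n & r n <= b]) ->
  (forall n m, (n <= m)%N -> l n <= l m /\ r m <= r n) ->
  (forall z, (forall n, l n <= z /\ z <= r n) -> z = p) ->
  forall eps, 0 < eps -> exists n, fine (mu (pimg g (l n) (r n))) < eps.
Proof.
move=> H Hm Hz eps e0; apply: contrapT => /forallNP Hn.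
have Hge n : (eps%:E <= mu (pimg g (l n) (r n)))%E.
  have [h1 h2 h3 h4] := H n.
  rewrite -(fineK (@mu_fin (l n) (r n) h1 (le_trans h2 h3) h4)) lee_fin leNgt; apply/negP; exact: Hn.
pose F := fun n => pimg g (l n) (r n).
have mF n : measurable (F n : set (borelX X)).
  by have [h1 h2 h3 h4] := H n; apply: meas_pimg.
have capF : \bigcap_n F n = [set ga p].
  apply/seteqP; split => [y Fy|y ->].
  - have [z /itvP' /andP[z1 z2] zy] := Fy 0%N I.
    suff zp : z = p by rewrite /= -zy zp.
    have [a0 _ _ b0] := H 0%N.
    apply: Hz => n; have [t /itvP' /andP[t1 t2] ty] := Fy n I.
    have [an _ _ bn] := H n.
    have tz : t = z.
      apply: inj_ga; rewrite ?in_itv /=; first (apply/andP; split; lra).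
        apply/andP; split; lra.
      by rewrite ty zy.
    by rewrite -tz t1 t2.
  - move=> n _; exists p => //; apply/itvP; have [h1 h2 h3 h4] := H n.
    by rewrite h2 h3.
have F0 : (mu (F 0%N) < +oo)%E.
  have [h1 h2 h3 h4] := H 0%N.
  by rewrite -ge0_fin_numE ?measure_ge0 // mu_fin // (le_trans h2 h3).
have mcap : measurable (\bigcap_n F n : set (borelX X)).
  by rewrite capF; exact: meas_set1.
have homF : {homo F : n m / (n <= m)%N >-> (m <= n)%O}.
  move=> n m nm; rewrite subsetEset => y [t /itvP' /andP[t1 t2] <-].
  have [h1 h2] := Hm n m nm.
  by exists t => //; apply/itvP; apply/andP; split; lra.
have cv := nonincreasing_cvg_mu F0 mF mcap homF.
have nH : \forall n \near \oo, (eps%:E <= (mu \o F) n)%E.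
  by apply: nearW => n; exact: Hge.
have := lime_ge (cvgP _ cv) nH.
rewrite (cvg_lim (@ereal_hausdorff _) cv) capF.
move=> h; have {h} : (eps%:E <= mu [set ga p])%E by apply: h; exact: _.
rewrite [X in (_ <= X)%E](_ : _ = 0%E); last exact: mu0.
by rewrite lee_fin leNgt e0.
Qed.

Lemma nu_right x eps : a <= x -> x < b -> 0 < eps ->
  exists2 y, x < y <= b & nu mu g y - nu mu g x < eps.
Proof.
move=> ax xb e0; pose c := b - x; have c0 : 0 < c by rewrite subr_gt0.
have cE : c = b - x by []. clearbody c.
have := @shrink (fun=> x) (fun n => x + c / n.+1%:R) x _ _ _ eps e0.
case=> [n|n m nm|z Hz|n Hn].
- have := w_pos c n c0; have := w_le c n c0; move: (c / n.+1%:R) => w h1 h2.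
  split => //; lra.
- by split => //; rewrite lerD2l w_mono // ltW.
- apply/eqP; rewrite eq_le; have [h _] := Hz 0%N; rewrite h andbT.
  rewrite leNgt; apply/negP => xz.
  have [n hn] : exists n, c / n.+1%:R < z - x by apply: w_small; rewrite subr_gt0.
  have [_ h2] := Hz n; move: (c / n.+1%:R) hn h2 => w hn h2; lra.
exists (x + c / n.+1%:R).
  have := w_pos c n c0; have := w_le c n c0; move: (c / n.+1%:R) => w h1 h2.
  apply/andP; split; lra.
rewrite nu_diff //.
  by rewrite lerDl ltW // w_pos.
have := w_le c n c0; move: (c / n.+1%:R) => w h1; lra.
Qed.

Lemma nu_left x eps : a < x -> x <= b -> 0 < eps ->
  exists2 y, a <= y < x & nu mu g x - nu mu g y < eps.
Proof.
move=> ax xb e0; pose c := x - a; have c0 : 0 < c by rewrite subr_gt0.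
have cE : c = x - a by []. clearbody c.
have := @shrink (fun n => x - c / n.+1%:R) (fun=> x) x _ _ _ eps e0.
case=> [n|n m nm|z Hz|n Hn].
- have := w_pos c n c0; have := w_le c n c0; move: (c / n.+1%:R) => w h1 h2.
  split => //; lra.
- by split => //; rewrite lerD2l lerN2 w_mono // ltW.
- apply/eqP; rewrite eq_le; have [_ h] := Hz 0%N; rewrite h /=.
  rewrite leNgt; apply/negP => xz.
  have [n hn] : exists n, c / n.+1%:R < x - z by apply: w_small; rewrite subr_gt0.
  have [h2 _] := Hz n; move: (c / n.+1%:R) hn h2 => w hn h2; lra.
exists (x - c / n.+1%:R).
  have := w_pos c n c0; have := w_le c n c0; move: (c / n.+1%:R) => w h1 h2.
  apply/andP; split; lra.
rewrite nu_diff //.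
  have := w_le c n c0; move: (c / n.+1%:R) => w h1; lra.
by rewrite lerBlDr lerDl ltW // w_pos.
Qed.

Lemma nu_b : nu mu g b = arc_h mu g.
Proof. by []. Qed.

Lemma ab : a <= b.
Proof. by case: Gg => -[]. Qed.

Lemma nu_surj t : 0 <= t -> t <= arc_h mu g ->
  exists x, a <= x <= b /\ nu mu g x = t.
Proof.
move=> t0 th; have lab := ab.
pose S := [set y | a <= y <= b /\ nu mu g y <= t].
have Sa : S a by split; [rewrite lexx lab|rewrite nu_a].
have ubS : ubound S b by move=> y [/andP[]].
have hS : has_sup S by split; [exists a|exists b].
pose s := sup S.
have as_ : a <= s by exact: sup_upper_bound.
have sb : s <= b by apply: ge_sup => //; exists a.
exists s; split; first by rewrite as_ sb.
have [lt|gt|//] := ltgtP (nu mu g s) t.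
- have sb' : s < b.
    rewrite lt_neqAle sb andbT; apply/eqP => sbe.
    by move: lt; rewrite sbe nu_b; lra.
  have h0 : 0 < t - nu mu g s by rewrite subr_gt0.
  have [y /andP[sy yb] hy] := @nu_right s (t - nu mu g s) as_ sb' h0.
  have : S y by split; [rewrite yb (le_trans as_ (ltW sy))|lra].
  move=> /sup_upper_bound; rewrite -/s => /(_ hS); lra.
- have as' : a < s.
    rewrite lt_neqAle as_ andbT; apply/eqP => ase.
    by move: gt; rewrite -ase nu_a; lra.
  have h0 : 0 < nu mu g s - t by rewrite subr_gt0.
  have [y /andP[ay ys] hy] := @nu_left s (nu mu g s - t) as' sb h0.
  have h1 : 0 < s - y by rewrite subr_gt0.
  have [e [/andP[ae eb] et] he] := @sup_adherent _ S (s - y) h1 hS.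
  have ye : y <= e by move: he; rewrite -/s; lra.
  have := @nu_le y e ay ye eb.
  lra.
Qed.

End S.

Lemma mdist_cont {R : realType} {X : pointedMetricType R} (p : X) :
  continuous (fun x : X => (mdist p x : R)).
Proof.
move=> x; apply/cvgrPdist_lt => e e0.
near=> t.
have : ball x e t by near: t; exact: nbhsx_ballx.
rewrite ballEmdist /= => h.
have h1 := metric_triangle p x t; have h2 := metric_triangle p t x.
rewrite (metric_sym t x) in h2.
rewrite ltr_norml; apply/andP; split; lra.
Unshelve. all: by end_near.
Qed.

Lemma diam_ub {R : realType} {X : pointedMetricType R} (A : set X) x y :
  compact A -> A x -> A y -> mdist x y <= diam A.
Proof.
move=> cA Ax Ay; apply: sup_upper_bound; last by exists x => //; exists y.
split; first by exists (mdist x y); exists x => //; exists y.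
have A0 : A !=set0 by exists x.
have [q _ hq] := compact_EVT_max A0 cA
  (@continuous_subspaceT _ _ A _ (mdist_cont x)).
exists (mdist x q + mdist x q) => _ [u Au [v Av <-]].
have h1 := metric_triangle u x v; rewrite (metric_sym u x) in h1.
have := hq u (mem_set Au); have := hq v (mem_set Av); lra.
Qed.

Section T.
Context {R : realType} {X : pointedMetricType R}
  {mu : {measure set (borelX X) -> \bar R}} {beta : R} {G : set (@mpath R X)}.
Hypothesis mu0 : forall x : X, mu [set x] = 0%E.
Hypothesis beta0 : 0 < beta.
Hypothesis HG : forall g, G g -> Gamma_mu mu g.
Hypothesis Hsub : subpath_closed G.
Context (C : R) (C0 : 0 < C)
  (HC : forall g, G g -> ((diam (Defs.Im g) `^ beta)%:E <= C%:E * mu (Defs.Im g))%E).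
Context (f : X -> R) (L : R)
  (Lf : forall x y, `|f x - f y| <= L * (mdist x y `^ beta)).
Context (g : mpath) (Gg : G g).

Lemma est c d : pa g <= c -> c < d -> d <= pb g ->
  `|f (pfun g d) - f (pfun g c)| <= Num.max L 0 * C * (nu mu g d - nu mu g c).
Proof.
move=> ac cd db.
have Gmg := HG _ Gg.
have [g' Gg' [pa' pb' agr]] := Hsub _ Gg _ _ ac cd db.
have Im' : Defs.Im g' = pimg g c d.
  rewrite /Defs.Im /pimg pa' pb'; apply/seteqP; split => y [t ht <-]; exists t => //.
    by rewrite agr // inE.
  by rewrite agr // inE.
have := HC _ Gg'.
rewrite Im' -(fineK (mu_fin mu0 Gmg c d ac (ltW cd) db)) -(nu_diff mu0 Gmg c d ac (ltW cd) db).
rewrite lee_fin => hd.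
have cp : compact (pimg g c d) by exact: (compact_pimg Gmg).
have md : mdist (pfun g d) (pfun g c) <= diam (pimg g c d).
  apply: diam_ub cp _ _.
    by exists d => //; apply/itvP; rewrite lexx ltW.
  by exists c => //; apply/itvP; rewrite lexx ltW.
have pw : mdist (pfun g d) (pfun g c) `^ beta <= diam (pimg g c d) `^ beta.
  by apply: ge0_ler_powR => //; rewrite ?ltW // nnegrE ?mdist_ge0 // (le_trans _ md) // mdist_ge0.
apply: (le_trans (Lf _ _)).
have p0 := powR_ge0 (mdist (pfun g d) (pfun g c)) beta.
apply: (le_trans (ler_wpM2r p0 (_ : L <= Num.max L 0))); first by rewrite le_max lexx.
rewrite -mulrA; apply: ler_wpM2l; first by rewrite le_max lexx orbT.
exact: le_trans pw hd.
Qed.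

End T.

Theorem lemma5p2 (R : realType) (X : pointedMetricType R)
  (mu : {measure set (borelX X) -> \bar R})
  (beta : R) (G : set (@mpath R X)) :
  (forall x : X, mu [set x] = 0%E) ->
  0 < beta ->
  (forall g, G g -> Gamma_mu mu g) ->
  subpath_closed G ->
  arc_chord mu beta G ->
  forall f : X -> R, lipschitz_beta beta f ->
  forall g, G g -> abs_cont_on 0 (arc_h mu g) (f \o arc_param mu g).
Proof.
move=> mu0 b0 HG Hsub [C C0 HC] f [L Lf] g Gg.
have Gmg := HG _ Gg.
pose K := Num.max L 0 * C.
have K0 : 0 <= K by rewrite mulr_ge0 ?(ltW C0) // le_max lexx orbT.
have Pt t : 0 <= t -> t <= arc_h mu g ->
  let x := get [set x | pa g <= x <= pb g /\ nu mu g x = t] in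
  pa g <= x <= pb g /\ nu mu g x = t.
  move=> t0 th /=.
  have [x hx] := nu_surj mu0 Gmg t t0 th.
  exact: (@xgetPex _ point [set x | pa g <= x <= pb g /\ nu mu g x = t] (ex_intro _ x hx)).
have Fl t s : 0 <= t -> t <= s -> s <= arc_h mu g ->
  `|(f \o arc_param mu g) s - (f \o arc_param mu g) t| <= K * (s - t).
  move=> t0 ts sh.
  have [/andP[at_ tb] nt] := Pt t t0 (le_trans ts sh).
  have [/andP[as_ sb] ns] := Pt s (le_trans t0 ts) sh.
  rewrite /= /arc_param.
  move: at_ tb nt as_ sb ns.
  set xt := get _; set xs := get _ => at_ tb nt as_ sb ns.
  have [lt|gt|eq] := ltgtP xt xs.
  - have := est mu0 b0 HG Hsub C HC f L Lf g Gg xt xs at_ lt sb.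
    by rewrite ns nt.
  - have := est mu0 b0 HG Hsub C HC f L Lf g Gg xs xt as_ gt tb.
    have := nu_le mu0 Gmg xs xt as_ (ltW gt) tb.
    rewrite ns nt distrC -/K => st.
    have -> : s = t by apply/eqP; rewrite eq_le st ts.
    by rewrite subrr mulr0.
  - by rewrite eq subrr normr0 mulr_ge0 // subr_ge0.
move=> eps e0.
have K1 : 0 < K + 1 by lra.
exists (eps / (K + 1)); first by rewrite divr_gt0.
move=> n u v Huv _ Hsum.
apply: (le_lt_trans (ler_sum _ (fun i _ => _ : _ <= K * (v i - u i)))).
  by move=> i _; have [h1 [h2 h3]] := Huv i; apply: Fl.
rewrite -mulr_sumr.
have S0 : 0 <= \sum_(i < n) (v i - u i).
  by apply: sumr_ge0 => i _; have [_ [h _]] := Huv i; rewrite subr_ge0.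
move: Hsum; rewrite ltr_pdivlMr // => Hs.
move: S0 Hs; set S := \sum_(i < n) _ => S0 Hs; nra.
Qed.
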